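(* Let $\mathcal{X}$ be an infinite instance domain, $l\ge0$ an integer, and $\mathcal{C}^l$ the class of unions of at most $l$ singletons. Then for every integer $k\ge0$, \[ \mathrm{ELdim}(\mathcal{C}^l,k)=\sup\Big\{t:\binom{t}{\le k+1}\le\binom{t}{\le l}\Big\}=\begin{cases}\infty,& k\le l-1,\\ l,& k\ge l.\end{cases} \]
   Context: $\mathcal{C}^l$ is the class of functions $\mathcal{X}\to\{-1,+1\}$ of the form $x\mapsto1-2I(x\in D)$ with $D\subseteq\mathcal{X}$, $|D|\le l$. $\binom{t}{\le j}=\sum_{i=0}^{j}\binom{t}{i}$. Extended mistake tree w.r.t. a class $\mathcal{H}$: a finite full binary tree (possibly a single leaf) in which each internal node $v$ is labeled by $x_v\in\mathcal{X}$ and has two solid downward edges, to its left child (label $-1$) and right child (label $+1$), plus one dashed downward edge to one of its two children; each leaf is labeled by some $h\in\mathcal{H}$ with $h(x_v)$ equal to the direction label at every internal node $v$ on the root-to-leaf path. A root-to-leaf path chooses at each internal node one downward edge; its length is its number of edges. The tree is $(k,m)$-difficult if every root-to-leaf path using at most $k$ solid edges has length at least $m$. $\mathrm{ELdim}(\mathcal{H},k)$ is the supremum of $m$ such that a $(k,m)$-difficult extended mistake tree w.r.t. $\mathcal{H}$ exists. *)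

(* Defs.v *)
(* Labels -1/+1 are encoded as bool: false = -1, true = +1. *)
From Stdlib Require List.
From mathcomp Require Import all_boot.
Set Implicit Arguments. Unset Strict Implicit. Unset Printing Implicit Defensive.

Definition binom_le (t j : nat) : nat := \sum_(i < j.+1) 'C(t, i).

(* C^l : functions x |-> 1 - 2 I(x in D) with |D| <= l, i.e. h x = -1 iff x in D *)
Definition Cl (X : Type) (l : nat) (h : X -> bool) : Prop :=
  exists D : list X, size D <= l /\ (forall x, h x = false <-> List.In x D).

(* Extended mistake tree: a leaf labelled by a hypothesis, or an internal node
   labelled by x, with a flag telling to which child the dashed edge goes
   (false = left child (label -1), true = right child (label +1)). *)
Inductive emtree (X : Type) : Type :=
| Leaf of (X -> bool)
| Node of X & bool & emtree X & emtree X.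
Arguments Leaf {X}.
Arguments Node {X}.

(* well-formedness w.r.t. a class H: every leaf hypothesis is in H and agrees
   with the direction labels on its root-to-leaf path (acc accumulates the
   (x_v, label) constraints of the ancestors). *)
Fixpoint em_valid_acc (X : Type) (H : (X -> bool) -> Prop)
    (acc : list (X * bool)) (t : emtree X) : Prop :=
  match t with
  | Leaf h => H h /\ (forall p, List.In p acc -> h p.1 = p.2)
  | Node x _ tl tr => em_valid_acc H ((x, false) :: acc) tl /\
                      em_valid_acc H ((x, true) :: acc) tr
  end.

Definition em_valid (X : Type) (H : (X -> bool) -> Prop) (t : emtree X) : Prop :=
  em_valid_acc H nil t.

Inductive edge := SolidL | SolidR | Dashed.

Definition is_solid (e : edge) : bool :=
  match e with Dashed => false | _ => true end.

Fixpoint root_leaf_path (X : Type) (t : emtree X) (s : seq edge) : bool :=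
  match t, s with
  | Leaf _, [::] => true
  | Node _ d tl tr, e :: s' =>
      match e with
      | SolidL => root_leaf_path tl s'
      | SolidR => root_leaf_path tr s'
      | Dashed => root_leaf_path (if d then tr else tl) s'
      end
  | _, _ => false
  end.

Definition difficult (X : Type) (k m : nat) (t : emtree X) : Prop :=
  forall s, root_leaf_path t s -> count is_solid s <= k -> m <= size s.

(* supremum in nat U {oo} of a set of naturals; None stands for oo *)
Definition is_sup (S : nat -> Prop) (d : option nat) : Prop :=
  match d with
  | None => forall n, exists m, S m /\ n < m
  | Some n => (forall m, S m -> m <= n) /\
              (forall n', (forall m, S m -> m <= n') -> n <= n')
  end.

Definition ELdim_set (X : Type) (H : (X -> bool) -> Prop) (k : nat) (m : nat) : Prop :=
  exists t : emtree X, em_valid H t /\ difficult k m t.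

Definition ELdim_is (X : Type) (H : (X -> bool) -> Prop) (k : nat) (d : option nat) : Prop :=
  is_sup (ELdim_set H k) d.

(* Main.v *)
Require Import Defs.
From Stdlib Require List.
From Stdlib Require Import ClassicalEpsilon.
From mathcomp Require Import all_boot.
From mathcomp Require Import zify.
Set Implicit Arguments. Unset Strict Implicit. Unset Printing Implicit Defensive.

Definition hD {X : Type} (D : list X) (x : X) : bool :=
  if excluded_middle_informative (List.In x D) then false else true.

Lemma hD_false X (D : list X) x : hD D x = false <-> List.In x D.
Proof. rewrite /hD; case: excluded_middle_informative => H; split => //. Qed.

Lemma hD_ext X (D1 D2 : list X) y :
  (List.In y D1 <-> List.In y D2) -> hD D1 y = hD D2 y.
Proof.
move=> E. case E1: (hD D1 y); case E2: (hD D2 y) => //.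
- by move/hD_false: E2 => /E /hD_false; rewrite E1.
- by move/hD_false: E1 => /E /hD_false; rewrite E2.
Qed.

Fixpoint T {X : Type} (c : nat) (ps : list X) (D : list X) : emtree X :=
  match ps with
  | nil => Leaf (hD D)
  | x :: ps' => match c with
                | 0 => Leaf (hD D)
                | c'.+1 => Node x true (T c' ps' (x :: D)) (T c ps' D)
                end
  end.

Lemma T_valid X l (ps : list X) : forall c D acc, List.NoDup ps ->
  (forall y, List.In y ps -> ~ List.In y D) ->
  (forall p, List.In p acc -> ~ List.In p.1 ps /\ hD D p.1 = p.2) ->
  size D + c <= l -> em_valid_acc (Cl l) acc (T c ps D).
Proof.
elim: ps => [|x ps IH] c D acc Hnd Hdis Hacc Hsz /=.
- split; last by move=> p /Hacc [].
  exists D; split; last by move=> y; apply: hD_false.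
  exact: leq_trans (leq_addr c _) Hsz.
- case: c Hsz => [|c] Hsz /=.
  + split; last by move=> p /Hacc [].
    exists D; split; last by move=> y; apply: hD_false.
    exact: leq_trans (leq_addr 0 _) Hsz.
  + move/List.NoDup_cons_iff: Hnd => [Hx Hnd].
    split; apply: IH => //.
    * move=> y Hy [Hyx|HyD]; first by subst y.
      by apply: (Hdis y (or_intror Hy)).
    * move=> p [<-|Hp] /=; first by split => //; apply/hD_false; left.
      have [Hn Hh] := Hacc p Hp. split; first by move=> H; apply: Hn; right.
      rewrite -Hh; apply: hD_ext; split; last by right.
      case=> // E; exfalso; apply: Hn; left; exact: E.
    * rewrite /=; lia.
    * by move=> y Hy; apply: Hdis; right.
    * move=> p [<-|Hp] /=.
        split => //. case E: (hD D x) => //. move/hD_false: E => E.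
        by exfalso; apply: (Hdis x (or_introl erefl)).
      have [Hn Hh] := Hacc p Hp. split => // H; apply: Hn; right; exact H.
Qed.

Lemma T_path X (ps : list X) : forall c D s, root_leaf_path (T c ps D) s ->
  size s = size ps \/ (c <= count is_solid s /\ c <= size s).
Proof.
elim: ps => [|x ps IH] c D s /=.
- case: s => //= _; by left.
- case: c => [|c].
  + case: s => //= _; by right.
  + case: s => // e s /=.
    case: e => /IH [H|[H1 H2]] /=; first [by left; rewrite H | right; split; lia].
Qed.

Lemma valid_leaf X H acc (t : emtree X) : em_valid_acc H acc t ->
  exists h : X -> bool, forall p, List.In p acc -> h p.1 = p.2.
Proof.
elim: t acc => [h|x b tl IHl tr IHr] acc /=.
- by move=> [_ Hh]; exists h.
- move=> [/IHl [h Hh] _]; exists h => p Hp; apply: Hh; right; exact: Hp.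
Qed.

Lemma left_path X l (t : emtree X) : forall acc, em_valid_acc (Cl l) acc t ->
  exists s ys, root_leaf_path t s /\ size s = length ys /\ List.NoDup ys /\
   (forall y b, List.In y ys -> ~ List.In (y, b) acc) /\
   exists h, Cl l h /\ (forall p, List.In p acc -> h p.1 = p.2) /\
     (forall y, List.In y ys -> h y = false).
Proof.
elim: t => [h|x b tl IHl tr IHr] acc /=.
- move=> [HC Hh]; exists [::], nil; do 3 (split => //); first exact: List.NoDup_nil.
  split => //; exists h; split => //.
- move=> [Vl Vr].
  have [s [ys [Hp [Hs [Hnd [Hav [h [HC [Hacc Hf]]]]]]]]] := IHl _ Vl.
  have xnot : forall b', ~ List.In (x, b') acc.
    case=> Hin.
    + have [h' Hh'] := valid_leaf Vl.
      have := Hh' _ (or_introl erefl); have := Hh' _ (or_intror Hin).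
      by move=> /= ->.
    + have [h' Hh'] := valid_leaf Vr.
      have := Hh' _ (or_introl erefl); have := Hh' _ (or_intror Hin).
      by move=> /= ->.
  exists (SolidL :: s), (x :: ys); split => //; split; first by rewrite /= Hs.
  split; first by apply: List.NoDup_cons => // Hx; apply: (Hav x false Hx); left.
  split.
    move=> y b' [<-|Hy] Hin; first exact: (xnot b').
    by apply: (Hav y b' Hy); right.
  exists h; split => //; split; first by move=> p Hp'; apply: Hacc; right.
  move=> y [<-|Hy]; last exact: Hf.
  exact: (Hacc (x, false) (or_introl erefl)).
Qed.

Lemma size_length A (s : list A) : size s = length s.
Proof. by elim: s => //= a s ->. Qed.

Lemma fresh_list X (Xinf : forall s : list X, exists x : X, ~ List.In x s) n :
  exists ps : list X, List.NoDup ps /\ size ps = n.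
Proof.
elim: n => [|n [ps [Hnd Hsz]]]; first by exists nil; split => //; apply: List.NoDup_nil.
have [x Hx] := Xinf ps. exists (x :: ps); split; last by rewrite /= Hsz.
exact: List.NoDup_cons.
Qed.

Lemma binom_leS t j : binom_le t j.+1 = binom_le t j + 'C(t, j.+1).
Proof. by rewrite /binom_le big_ord_recr. Qed.

Lemma binom_mono t j1 j2 : j1 <= j2 -> binom_le t j1 <= binom_le t j2.
Proof.
elim: j2 => [|j IH]; first by rewrite leqn0 => /eqP ->.
rewrite leq_eqVlt => /orP [/eqP ->//|H].
rewrite binom_leS; exact: leq_trans (IH H) (leq_addr _ _).
Qed.

Lemma binom_big t j : binom_le t (t + j) = binom_le t t.
Proof.
elim: j => [|j IH]; first by rewrite addn0.
by rewrite addnS binom_leS IH bin_small ?addn0 //; lia.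
Qed.

Theorem mainTheorem10 (X : Type)
  (X_infinite : forall s : list X, exists x : X, ~ List.In x s)
  (l k : nat) :
  let d := if k < l then None else Some l in
  ELdim_is (Cl (X:=X) l) k d /\
  is_sup (fun t => binom_le t k.+1 <= binom_le t l) d.
Proof.
move=> d; rewrite /d /ELdim_is; case: ltnP => Hkl.
- split.
  + move=> n. have [ps [Hnd Hsz]] := fresh_list X_infinite n.+1.
    exists n.+1; split => //. exists (T l ps nil); split; [apply T_valid; try done; move=> *; simpl in *; tauto|].
    move=> s Hp Hc. case: (T_path Hp) => [->|[H1 _]]; first by rewrite Hsz.
    lia.
  + move=> n; exists n.+1; split => //. exact: binom_mono.
- split; split.
  + move=> m [t [Vt Dt]].
    have [s [ys [Hp [Hs [Hnd [_ [h [[D [HD HhD]] [_ Hf]]]]]]]]] := left_path Vt.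
    have Hlen : length ys <= length D.
      apply/leP; apply: List.NoDup_incl_length => // y Hy.
      by apply/HhD; apply: Hf.
    have Hsl : size s <= l by rewrite Hs; apply: leq_trans Hlen _; rewrite -size_length.
    exact: leq_trans (Dt s Hp (leq_trans (count_size _ _) (leq_trans Hsl Hkl))) Hsl.
  + move=> n' Hn'; apply: Hn'.
    have [ps [Hnd Hsz]] := fresh_list X_infinite l.
    exists (T l ps nil); split; [apply T_valid; try done; move=> *; simpl in *; tauto|].
    move=> s Hp Hc. case: (T_path Hp) => [->|[_ H2]] //; by rewrite Hsz.
  + move=> t Ht. rewrite leqNgt; apply/negP => Hlt.
    have H : binom_le t l.+1 <= binom_le t k.+1 by apply: binom_mono.
    have H2 := leq_trans H Ht. rewrite binom_leS in H2.
    have : 0 < 'C(t, l.+1) by rewrite bin_gt0.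
    lia.
  + move=> n' Hn'; apply: Hn'.
    have -> : k.+1 = l + (k.+1 - l) by lia.
    by rewrite binom_big.
Qed.
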